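(* Let $\rho_1,\rho_2\in\mathbb{M}_2(\mathbb{C})$ be any two non-maximally mixed (NMM) thermal states. Then there exists $\Lambda\in SL(2,\mathbb{C})$ such that the action described below maps $\rho_1$ to $\rho_2$. Explicitly: writing $\rho_1=e^{-\beta H_1}/\mathrm{tr}(e^{-\beta H_1})$ and $\rho_2=e^{-\beta H_2}/\mathrm{tr}(e^{-\beta H_2})$ with a common $\beta>0$ and Hermitian $H_a$ having spectrum $\{0,\epsilon_a\}$, $\epsilon_a>0$, there is $\Lambda\in SL(2,\mathbb{C})$ with $$\rho_2=\frac{e^{-\beta(\Lambda H_1\Lambda^* )}}{\mathrm{tr}\big(e^{-\beta(\Lambda H_1\Lambda^* )}\big)}.$$
   Context: $\mathbb{M}_2(\mathbb{C})$ denotes the $2\times2$ complex matrices, $\Lambda^*$ the conjugate transpose, $\mathbb{1}_2$ the identity. A thermal state on $\mathbb{M}_2(\mathbb{C})$ is a density matrix of the Gibbs form $\rho=e^{-\beta H}/\mathrm{tr}(e^{-\beta H})$ with $\beta>0$ and $H$ Hermitian; it is non-maximally mixed (NMM) if $\rho\neq\frac12\mathbb{1}_2$. Every such $\rho$ can, for any prescribed $\beta>0$, be written in this form with a unique Hermitian $H$ whose spectrum is $\{0,\epsilon\}$ with $\epsilon>0$. The action of $\Lambda\in SL(2,\mathbb{C})$ on NMM thermal states is defined using this normalized $H$: $e^{-\beta H}/\mathrm{tr}(e^{-\beta H})\mapsto e^{-\beta(\Lambda H\Lambda^* )}/\mathrm{tr}(e^{-\beta(\Lambda H\Lambda^* )})$.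 *)

(* Defs.v *)
From HB Require Import structures.
From mathcomp Require Import all_boot all_order all_algebra.
From mathcomp Require Import all_classical all_reals all_analysis.
From mathcomp.real_closed Require Import complex.
Set Implicit Arguments. Unset Strict Implicit. Unset Printing Implicit Defensive.
Import Order.TTheory GRing.Theory Num.Theory.
Import numFieldNormedType.Exports.
Local Open Scope ring_scope.
Local Open Scope complex_scope.

Section Thermal.
Variable R : realType.
Local Notation C := (R[i]).

Definition adjmx (A : 'M[C]_2) : 'M[C]_2 := (map_mx (@conjc R) A)^T.

Definition herm_mx (A : 'M[C]_2) : Prop := adjmx A = A.

Definition exp_psum (A : 'M[C]_2) (n : nat) : 'M[C]_2 :=
  \sum_(k < n) (k`!%:R)^-1 *: A ^+ k.

Definition mexp (A : 'M[C]_2) : 'M[C]_2 :=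
  \matrix_(i < 2, j < 2)
    Complex (limn (fun n => @complex.Re R (exp_psum A n i j)))
            (limn (fun n => @complex.Im R (exp_psum A n i j))).

Definition gibbs (beta : R) (H : 'M[C]_2) : 'M[C]_2 :=
  (\tr (mexp (- (beta%:C) *: H)))^-1 *: mexp (- (beta%:C) *: H).

Definition thermal (rho : 'M[C]_2) : Prop :=
  exists (beta : R) (H : 'M[C]_2), 0 < beta /\ herm_mx H /\ rho = gibbs beta H.

Definition NMM (rho : 'M[C]_2) : Prop := rho <> (2%:R)^-1 *: 1%:M.

Definition spectrum_0_eps (A : 'M[C]_2) (eps : R) : Prop :=
  forall l : C, eigenvalue A l <-> (l = 0 \/ l = eps%:C).

Definition SL2 (L : 'M[C]_2) : Prop := \det L = 1.

End Thermal.

(* Main.v *)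
Require Import Defs.
From HB Require Import structures.
From mathcomp Require Import all_boot all_order all_algebra.
From mathcomp Require Import all_classical all_reals all_analysis.
From mathcomp.real_closed Require Import complex.
From mathcomp Require Import ring lra.
Import Order.TTheory GRing.Theory Num.Theory.
Local Open Scope ring_scope.
Local Open Scope complex_scope.
Section S.
Variable R : realType.
Local Notation C := (R[i]).
Definition mx2 (a b c d : C) : 'M[C]_2 :=
  \matrix_(i < 2, j < 2) if i == 0 then (if j == 0 then a else b) else (if j == 0 then c else d).

Lemma mx2_eta (A : 'M[C]_2) : A = mx2 (A 0 0) (A 0 1) (A 1 0) (A 1 1).
Proof.
apply/matrixP => i j; rewrite !mxE.
case: i => [[|[|i]] Hi] //; case: j => [[|[|j]] Hj] //=; congr (A _ _); exact: val_inj.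
Qed.

Lemma mx2_eq a b c d a' b' c' d' : a = a' -> b = b' -> c = c' -> d = d' ->
  mx2 a b c d = mx2 a' b' c' d'.
Proof. by move=> -> -> -> ->. Qed.

Lemma mulmx2 a b c d a' b' c' d' : mx2 a b c d *m mx2 a' b' c' d' =
  mx2 (a * a' + b * c') (a * b' + b * d') (c * a' + d * c') (c * b' + d * d').
Proof.
apply/matrixP => i j; rewrite !mxE !big_ord_recl big_ord0 !mxE /=.
by case: i => [[|[|i]] Hi] //; case: j => [[|[|j]] Hj] //=; rewrite addr0.
Qed.

Lemma adjmx2 a b c d : adjmx (mx2 a b c d) = mx2 a^*%C c^*%C b^*%C d^*%C.
Proof.
apply/matrixP => i j; rewrite !mxE.
by case: i => [[|[|i]] Hi] //; case: j => [[|[|j]] Hj] //=.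
Qed.

Lemma det2 a b c d : \det (mx2 a b c d) = a * d - b * c.
Proof.
rewrite (expand_det_row _ 0) !big_ord_recl big_ord0 /cofactor !det_mx11 !mxE /=.
rewrite addr0 !expr0 !mul1r expr1 mulN1r mulrN; congr (_ - _).
Qed.
Lemma mx2_inj a b c d a' b' c' d' : mx2 a b c d = mx2 a' b' c' d' ->
  [/\ a = a', b = b', c = c' & d = d'].
Proof.
move=> E; split.
- by move: (congr1 (fun M : 'M[C]_2 => M 0 0) E); rewrite !mxE.
- by move: (congr1 (fun M : 'M[C]_2 => M 0 1) E); rewrite !mxE.
- by move: (congr1 (fun M : 'M[C]_2 => M 1 0) E); rewrite !mxE.
- by move: (congr1 (fun M : 'M[C]_2 => M 1 1) E); rewrite !mxE.
Qed.

Lemma scalar_mx2 l : l%:M = mx2 l 0 0 l.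
Proof.
apply/matrixP => i j; rewrite !mxE.
by case: i => [[|[|i]] Hi] //; case: j => [[|[|j]] Hj] //=.
Qed.

Lemma submx2 a b c d a' b' c' d' : mx2 a b c d - mx2 a' b' c' d' =
  mx2 (a - a') (b - b') (c - c') (d - d').
Proof.
apply/matrixP => i j; rewrite !mxE.
by case: i => [[|[|i]] Hi] //; case: j => [[|[|j]] Hj] //=.
Qed.

Lemma eig_det (A : 'M[C]_2) l : eigenvalue A l -> \det (A - l%:M) = 0.
Proof.
move/eigenvalueP=> [v Hv nz]; apply/eqP/det0P; exists v => //.
by rewrite mulmxBr Hv mul_mx_scalar subrr.
Qed.

Lemma ReD (x y : C) : complex.Re (x + y) = complex.Re x + complex.Re y. Proof. by case: x; case: y. Qed.
Lemma ImD (x y : C) : complex.Im (x + y) = complex.Im x + complex.Im y. Proof. by case: x; case: y. Qed.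
Lemma ReN (x : C) : complex.Re (- x) = - complex.Re x. Proof. by case: x. Qed.
Lemma ImN (x : C) : complex.Im (- x) = - complex.Im x. Proof. by case: x. Qed.
Lemma ReM (x y : C) : complex.Re (x * y) = complex.Re x * complex.Re y - complex.Im x * complex.Im y. Proof. by case: x; case: y. Qed.
Lemma ImM (x y : C) : complex.Im (x * y) = complex.Re x * complex.Im y + complex.Im x * complex.Re y. Proof. by case: x; case: y. Qed.
Lemma ReJ (x : C) : complex.Re (x^*)%C = complex.Re x. Proof. by case: x. Qed.
Lemma ImJ (x : C) : complex.Im (x^*)%C = - complex.Im x. Proof. by case: x. Qed.
Lemma ReR (r : R) : complex.Re (r%:C) = r. Proof. by []. Qed.
Lemma ImR (r : R) : complex.Im (r%:C) = 0. Proof. by []. Qed.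
Lemma Re0 : complex.Re (0 : C) = 0. Proof. by []. Qed.
Lemma Im0 : complex.Im (0 : C) = 0. Proof. by []. Qed.
Lemma Re1 : complex.Re (1 : C) = 1. Proof. by []. Qed.
Lemma Im1 : complex.Im (1 : C) = 0. Proof. by []. Qed.
Lemma ceqP (x y : C) : complex.Re x = complex.Re y -> complex.Im x = complex.Im y -> x = y.
Proof. by case: x; case: y => ? ? ? ? /= -> ->. Qed.
Ltac cplx := apply: ceqP; rewrite /= ?(ReD, ImD, ReN, ImN, ReM, ImM, ReJ, ImJ, ReR, ImR, Re0, Im0, Re1, Im1) /=.

Lemma key (H : 'M[C]_2) eps : herm_mx H -> 0 < eps -> spectrum_0_eps H eps ->
  exists M, \det M = 1 /\ H = M *m mx2 1 0 0 0 *m adjmx M.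
Proof.
move=> hH he hs.
have d0 := @eig_det H _ (proj2 (hs 0) (or_introl erefl)).
have d1 := @eig_det H _ (proj2 (hs eps%:C) (or_intror erefl)).
move: hH d0 d1; rewrite /herm_mx (mx2_eta H) !scalar_mx2 !submx2 !det2 adjmx2.
move: (H 0 0) (H 0 1) (H 1 0) (H 1 1) => [p1 p2] [q1 q2] [c1 c2] [r1 r2].
move=> /mx2_inj [] /= [] E1 E2 [] E3 E4 [] E5 E6 [] E7 E8.
have {E1} P2 : p2 = 0 by lra.
have {E5} R2 : r2 = 0 by lra.
subst c1 c2 p2 r2; move: E6; simpc; move=> /(congr1 (@complex.Re R)) /= E6.
rewrite !subr0 in E7 E8.
have hq : p1 * r1 = q1 ^+ 2 + q2 ^+ 2 by lra.
have h0 : eps * (eps - p1 - r1) = 0 by nra.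
have hsum : p1 + r1 = eps.
  move/eqP: h0; rewrite mulf_eq0 gt_eqF //= subr_eq0 => /eqP; lra.
have a0 : 0 <= p1.
  case: (lerP 0 p1) => // hp; have : p1 * r1 < 0 by nra.
  nra.
have b0 : 0 <= r1 by nra.
case: (ler0P p1) => [pa|pa].
  have {a0 pa}a0 : p1 = 0 by apply/le_anti/andP.
  subst p1.
  have qz : q1 = 0 /\ q2 = 0 by split; nra.
  case: qz => -> ->.
  have rb : r1 = eps by nra.
  subst r1.
  set s := Num.sqrt eps.
  have s0 : 0 < s by rewrite sqrtr_gt0.
  have ss : s * s = eps by rewrite -expr2 sqr_sqrtr // ltW.
  exists (mx2 0 (- s^-1)%:C s%:C 0).
  rewrite det2 adjmx2 !mulmx2; split.
    by cplx; field; rewrite gt_eqF.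
  by apply: mx2_eq; cplx; rewrite -?ss; ring.
have p0 : 0 < p1 by [].
set s := Num.sqrt p1.
have s0 : 0 < s by rewrite sqrtr_gt0.
have ss : s * s = p1 by rewrite -expr2 sqr_sqrtr // ltW.
exists (mx2 s%:C 0 (q1 / s -i* (q2 / s)) (s^-1)%:C).
rewrite det2 adjmx2 !mulmx2; split.
  by cplx; field; rewrite gt_eqF.
have hr : r1 = (q1 ^+ 2 + q2 ^+ 2) / (s * s).
  by rewrite ss -hq; field; rewrite gt_eqF.
apply: mx2_eq; cplx; rewrite -?ss ?hr; field; by rewrite ?gt_eqF ?mulf_neq0 // gt_eqF.
Qed.
Lemma adjmxM (A B : 'M[C]_2) : adjmx (A *m B) = adjmx B *m adjmx A.
Proof. by rewrite /adjmx map_mxM trmx_mul. Qed.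
Lemma adjmx1 : adjmx (1%:M : 'M[C]_2) = 1%:M.
Proof. by rewrite /adjmx map_mx1 trmx1. Qed.
End S.

Theorem proposition2 (R : realType) (rho1 rho2 : 'M[complex R]_2)
  (beta : R) (H1 H2 : 'M[complex R]_2) (eps1 eps2 : R) :
  thermal rho1 -> NMM rho1 -> thermal rho2 -> NMM rho2 ->
  0 < beta ->
  herm_mx H1 -> 0 < eps1 -> spectrum_0_eps H1 eps1 -> rho1 = gibbs beta H1 ->
  herm_mx H2 -> 0 < eps2 -> spectrum_0_eps H2 eps2 -> rho2 = gibbs beta H2 ->
  exists L : 'M[complex R]_2,
    SL2 L /\ rho2 = gibbs beta (L *m H1 *m adjmx L).
Proof.
move=> _ _ _ _ _ h1 e1 s1 _ h2 e2 s2 ->.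
have [M1 [d1 E1]] := @key R _ _ h1 e1 s1.
have [M2 [d2 E2]] := @key R _ _ h2 e2 s2.
have u1 : M1 \in unitmx by rewrite unitmxE d1 unitr1.
exists (M2 *m invmx M1); split.
  by rewrite /SL2 det_mulmx det_inv d1 d2 invr1 mulr1.
congr gibbs.
rewrite E1 E2 adjmxM !mulmxA.
rewrite -(mulmxA M2 (invmx M1)) mulVmx // mulmx1.
by rewrite -(mulmxA _ (adjmx M1)) -adjmxM mulVmx // adjmx1 mulmx1.
Qed.
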